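(* In the setting below, if $C$ is Euclidean LCD, then $l(x)=(x^m-1)/\mathrm{lcm}(g_{11}(x),g_{22}(x))$ is self-reciprocal.
   Context: Let $q$ be a prime power, $F=\mathbb{F}_q$, $m\ge1$ with $\gcd(q,m)=1$, and $R=F[x]/\langle x^m-1\rangle$; elements of $R$ are represented by polynomials of degree $<m$ and identified with their coefficient vectors in $F^m$. A quasi-cyclic code of length $2m$ and index $2$ is an $R$-submodule $C\subseteq R^2$. The Euclidean inner product of $(a_1,a_2),(b_1,b_2)\in R^2$ is the sum of the standard dot products of the coefficient vectors of $a_1,b_1$ and of $a_2,b_2$; $C$ is Euclidean LCD if $C\cap C^{\perp_e}=\{0\}$. For a nonzero polynomial $f$ of degree $k$, $f^*(x)=x^kf(x^{-1})$; $f$ is self-reciprocal if $f^*=\alpha f$ for some $\alpha\in F$. Suppose $C$ is generated as an $R$-module by $(g_{11}(x),g_{12}(x))$ and $(0,g_{22}(x))$, where $g_{11},g_{12},g_{22}\in F[x]$ satisfy: $g_{11}\mid x^m-1$, $g_{22}\mid x^m-1$, $\deg g_{12}<\deg g_{22}$, and $g_{11}g_{22}\mid (x^m-1)g_{12}$. *)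

(* Defs.v *)
From HB Require Import structures.
From mathcomp Require Import all_boot all_order all_algebra all_field.
Set Implicit Arguments. Unset Strict Implicit. Unset Printing Implicit Defensive.
Import GRing.Theory.
Local Open Scope ring_scope.

Section QC.
Variable F : fieldType.

Definition modxm (m : nat) (p : {poly F}) : {poly F} := p %% ('X^m - 1).

(* membership in the R-submodule of R^2 generated by (g11,g12) and (0,g22);
   codewords are pairs of reduced representatives *)
Definition in_qc2 (m : nat) (g11 g12 g22 : {poly F}) (c : {poly F} * {poly F}) : Prop :=
  exists f h : {poly F}, c = (modxm m (f * g11), modxm m (f * g12 + h * g22)).

Definition eip (m : nat) (c d : {poly F} * {poly F}) : F :=
  \sum_(i < m) (c.1`_i * d.1`_i + c.2`_i * d.2`_i).

Definition euclidean_LCD (m : nat) (g11 g12 g22 : {poly F}) : Prop :=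
  forall c, in_qc2 m g11 g12 g22 c ->
    (forall d, in_qc2 m g11 g12 g22 d -> eip m c d = 0) -> c = (0, 0).

(* reciprocal polynomial f^*(x) = x^(deg f) f(1/x) *)
Definition recip (f : {poly F}) : {poly F} :=
  \poly_(i < size f) f`_(size f - 1 - i).

Definition self_reciprocal (f : {poly F}) : Prop :=
  f != 0 /\ exists alpha : F, recip f = alpha *: f.

(* least common multiple of polynomials (defined up to a nonzero scalar) *)
Definition lcmp (p q : {poly F}) : {poly F} := (p * q) %/ gcdp p q.
End QC.

(* Main.v *)
Require Import Defs.
From HB Require Import structures.
From mathcomp Require Import all_boot all_order all_algebra all_field.
Set Implicit Arguments. Unset Strict Implicit.
From mathcomp Require Import zify ring.
Import GRing.Theory.
Local Open Scope ring_scope.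

Section Aux.
Variable F : fieldType.
Variable m : nat.
Hypothesis m_gt0 : (0 < m)%N.
Local Notation M := ('X^m - 1 : {poly F}).
Definition iot (p : {poly F}) := p \Po 'X^(m.-1).

Lemma dvd_Xmk k : M %| 'X^(m * k) - 1.
Proof. rewrite exprM [X in _ %| X]subrX1. exact: dvdp_mulIl. Qed.

Lemma dvd_iotM : M %| iot M.
Proof.
rewrite /iot comp_polyB comp_Xn_poly -polyC1 comp_polyC polyC1 -exprM mulnC.
exact: dvd_Xmk.
Qed.

Lemma dvdp_sumr (I : finType) (d : {poly F}) (G : I -> {poly F}) :
  (forall i, d %| G i) -> d %| \sum_i G i.
Proof.
move=> H; apply: (big_ind (fun x => d %| x)) => //.
by move=> x y; apply: dvdp_add.
Qed.

Lemma sum_coefs (b : {poly F}) n : (size b <= n)%N ->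
  b = \sum_(i < n) b`_i *: 'X^i.
Proof.
move=> Hs; rewrite -poly_def; apply/polyP => i; rewrite coef_poly.
by case: ltnP => // Hi; rewrite nth_default // (leq_trans Hs Hi).
Qed.

Lemma iot_sum (b : {poly F}) n : (size b <= n)%N ->
  iot b = \sum_(i < n) b`_i *: 'X^(m.-1) ^+ i.
Proof.
move=> Hs; rewrite /iot {1}(sum_coefs Hs).
elim/big_rec2: _ => [|i x y _ Hxy]; first by rewrite comp_poly0.
by rewrite comp_polyD comp_polyZ comp_Xn_poly Hxy.
Qed.

Lemma rev_cong (b : {poly F}) n : (size b <= n)%N ->
  M %| \poly_(i < n) b`_(n.-1 - i) - 'X^(n.-1) * iot b.
Proof.
move=> Hs; rewrite (iot_sum Hs) poly_def mulr_sumr.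
rewrite (reindex_inj rev_ord_inj) /= -sumrB; apply: dvdp_sumr => i.
have Hi := ltn_ord i.
have -> : (n.-1 - (n - i.+1) = i)%N by lia.
rewrite -scalerAr -scalerBr; rewrite -mul_polyC; apply: dvdp_mull.
have -> : 'X^(n.-1) * 'X^(m.-1) ^+ i = 'X^(n - i.+1) * 'X^(m * i) :> {poly F}.
  by rewrite -exprM -!exprD; congr (_ ^+ _); rewrite mulnC; nia.
rewrite -{1}(mulr1 'X^(n - i.+1)) -mulrBr -[1 - _]opprB mulrN dvdpNr.
by apply: dvdp_mull; apply: dvd_Xmk.
Qed.

Lemma iotB p q : iot (p - q) = iot p - iot q.
Proof. exact: comp_polyB. Qed.
Lemma iotD p q : iot (p + q) = iot p + iot q.
Proof. exact: comp_polyD. Qed.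
Lemma iotN p : iot (- p) = - iot p.
Proof. by rewrite -[- p]sub0r iotB /iot comp_poly0 sub0r. Qed.
Lemma iotM p q : iot (p * q) = iot p * iot q.
Proof. exact: comp_polyM. Qed.

Lemma Mn0 : ('X^m - 1 : {poly F}) != 0.
Proof. by rewrite -size_poly_eq0 size_XnsubC. Qed.

Lemma coef_rev_mul (a b : {poly F}) :
  (a * \poly_(i < m) b`_(m.-1 - i))`_(m.-1) = \sum_(i < m) a`_i * b`_i.
Proof.
rewrite coefM prednK //; apply: eq_bigr => i _.
rewrite coef_poly; have Hi := ltn_ord i.
have -> : (m.-1 - i < m)%N by lia.
by have -> : (m.-1 - (m.-1 - i) = i)%N by lia.
Qed.

Lemma coef_vanish (P : {poly F}) : (size P <= m.-1 + m)%N -> M %| P -> P`_(m.-1) = 0.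
Proof.
move=> Hs /dvdpP [Q EQ]; rewrite EQ mulrBr mulr1 coefB coefMXn.
have Hl: (m.-1 < m)%N by lia.
rewrite Hl sub0r; apply/eqP; rewrite oppr_eq0; apply/eqP.
have [->|Qn0] := eqVneq Q 0; first by rewrite coef0.
apply: nth_default; move: Hs; rewrite EQ size_mul // ?Mn0 // size_XnsubC // addnS /= -!subn1 leq_add2r; apply.
Qed.

Lemma eip0 (a1 a2 b1 b2 : {poly F}) : (size a1 <= m)%N -> (size a2 <= m)%N ->
  (size b1 <= m)%N -> (size b2 <= m)%N ->
  M %| a1 * iot b1 + a2 * iot b2 -> eip m (a1, a2) (b1, b2) = 0.
Proof.
move=> s1 s2 s3 s4 Hd; rewrite /eip /=.
pose r b := \poly_(i < m) b`_(m.-1 - i) : {poly F}.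
have -> : \sum_(i < m) (a1`_i * b1`_i + a2`_i * b2`_i) =
    (a1 * r b1 + a2 * r b2)`_(m.-1) by rewrite coefD !coef_rev_mul big_split.
apply: coef_vanish.
  apply: (leq_trans (size_polyD _ _)); rewrite geq_max.
  have sr : forall b, (size (r b) <= m)%N by move=> b; exact: size_poly.
  apply/andP; split; apply: (leq_trans (size_polyMleq _ _)).
    by have := sr b1; lia.
  by have := sr b2; lia.
have -> : a1 * r b1 + a2 * r b2 = a1 * (r b1 - 'X^(m.-1) * iot b1) +
    a2 * (r b2 - 'X^(m.-1) * iot b2) + 'X^(m.-1) * (a1 * iot b1 + a2 * iot b2)
  by ring.
by rewrite !dvdp_add ?dvdp_mull // rev_cong.
Qed.

Lemma modp_eqD (d p q k : {poly F}) : p = q + k * d -> p %% d = q %% d.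
Proof. by move->; rewrite modpD modp_mull addr0. Qed.

Lemma modpE' (p : {poly F}) : p %% M = p - (p %/ M) * M.
Proof. by apply/eqP; rewrite eq_sym subr_eq addrC -divp_eq. Qed.

Lemma size_modxm (p : {poly F}) : (size (modxm m p) <= m)%N.
Proof. by have := ltn_modp p M; rewrite Mn0 size_XnsubC. Qed.

End Aux.

Section Code.
Variable F : fieldType.
Variable m : nat.
Hypothesis m_gt0 : (0 < m)%N.
Local Notation M := ('X^m - 1 : {poly F}).
Variables (g11 g12 g22 l L : {poly F}).
Hypothesis E : l * L = M.
Hypothesis d11 : g11 %| L.
Hypothesis d22 : g22 %| L.
Hypothesis cop : coprimep l L.

Lemma inv_mod (g : {poly F}) : g %| L -> exists u v, u * g = 1 - v * l.
Proof.
move=> gL; have := coprimep_dvdl gL cop.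
case/Bezout_eq1_coprimepP => [[v u]] /= H.
by exists u, v; rewrite -H; ring.
Qed.

Lemma in_C (a b : {poly F}) : in_qc2 m g11 g12 g22 (modxm m (L * a), modxm m (L * b)).
Proof.
have [u [v Hu]] := inv_mod d11.
have [u' [v' Hu']] := inv_mod d22.
exists (L * a * u), (L * (b - a * u * g12) * u').
rewrite /modxm; congr pair.
  apply: (modp_eqD (k := a * v)).
  rewrite (_ : L * a * u * g11 = L * a * (u * g11)); last by ring.
  by rewrite Hu -E; ring.
apply: (modp_eqD (k := (b - a * u * g12) * v')).
rewrite (_ : L * a * u * g12 + L * (b - a * u * g12) * u' * g22 =
   L * b + L * (b - a * u * g12) * ((u' * g22) - 1)); last by ring.
by rewrite Hu' -E; ring.
Qed.

Lemma ortho (a b : {poly F}) :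
  l %| a * iot m g11 + b * iot m g12 -> l %| b * iot m g22 ->
  forall d, in_qc2 m g11 g12 g22 d -> eip m (modxm m (L * a), modxm m (L * b)) d = 0.
Proof.
move=> /dvdpP [w1 H1] /dvdpP [w2 H2] d [f [h ->]].
apply: eip0 => //; try exact: size_modxm.
have /dvdpP [s Hs] := dvd_iotM F m.
rewrite /modxm !modpE'; set MM := 'X^m - 1 in Hs *.
have EM : MM = l * L by rewrite /MM E.
clearbody MM.
rewrite !(iotB, iotM, iotD, iotN) Hs.
move: ((L * a) %/ MM) ((L * b) %/ MM) (iot m ((f * g11) %/ MM))
  (iot m ((f * g12 + h * g22) %/ MM)) => k1 k2 T1 T2.
set A := iot m g11; set B := iot m g12; set G := iot m g22.
set If := iot m f; set Ih := iot m h.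
have -> : (L * a - k1 * MM) * (If * A + - (T1 * (s * MM))) +
   (L * b - k2 * MM) * (If * B + Ih * G + - (T2 * (s * MM))) =
   MM * (- (L * a * T1 * s) - k1 * (If * A) + k1 * T1 * s * MM
         - L * b * T2 * s - k2 * (If * B + Ih * G) + k2 * T2 * s * MM)
   + L * If * (a * A + b * B) + L * Ih * (b * G) by ring.
rewrite H1 H2 !dvdp_add ?dvdp_mulIl //.
  rewrite EM (_ : L * If * (w1 * l) = (If * w1) * (l * L)); last by ring.
  exact: dvdp_mull.
rewrite EM (_ : L * Ih * (w2 * l) = (Ih * w2) * (l * L)); last by ring.
exact: dvdp_mull.
Qed.

End Code.

Lemma char_ok (F : finFieldType) (m : nat) : coprime #|F| m -> m%:R != 0 :> F.
Proof.
move=> cop; have [p pr pc] := @finPcharP F.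
have cardF : (#|F|%:R : F) = 0.
  have : \sum_(x : F) x = \sum_(x : F) (1 + x) by rewrite (reindex_inj (addrI 1)).
  rewrite big_split /= sumr_const => H.
  have := congr1 (fun z => z - \sum_(x : F) x) H.
  by rewrite /= addrK subrr => ->.
have pF : (p %| #|F|)%N by rewrite (dvdn_pcharf pc) cardF.
rewrite -(dvdn_pcharf pc); apply/negP => pm.
have : (p %| gcdn #|F| m)%N by rewrite dvdn_gcd pF pm.
rewrite (eqP cop) dvdn1 => /eqP p1.
by rewrite p1 in pr.
Qed.

Lemma sqfree (F : fieldType) (m : nat) (l L : {poly F}) : (0 < m)%N ->
  m%:R != 0 :> F -> l * L = 'X^m - 1 -> coprimep l L.
Proof.
move=> m0 mn0 E.
set g := gcdp l L.
have gl := dvdp_gcdl l L; have gL := dvdp_gcdr l L.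
have gM : g %| 'X^m - 1 by rewrite -E; apply: dvdp_mulr.
have gM' : g %| ('X^m - 1)^`().
  by rewrite -E derivM; apply: dvdp_add; [apply: dvdp_mull | apply: dvdp_mulr].
have Hm : (m%:R)%:P = 'X * ('X^m - 1)^`() - ('X^m - 1) *+ m :> {poly F}.
  rewrite derivB derivXn derivC subr0 mulrnAr -exprS prednK // polyC_natr.
  ring.
have g1 : g %| 1.
  have : g %| (m%:R)%:P.
    by rewrite Hm; apply: dvdp_sub; [apply: dvdp_mull | rewrite -mulr_natr; apply: dvdp_mulr].
  by rewrite -[X in _ %| X]mulr1 mul_polyC dvdpZr.
by rewrite coprimep_def -dvdp1.
Qed.

Unset Implicit Arguments.

Theorem lemma3p3 (F : finFieldType) (m : nat) (g11 g12 g22 : {poly F}) :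
  (0 < m)%N -> coprime #|F| m ->
  g11 %| 'X^m - 1 -> g22 %| 'X^m - 1 ->
  (size g12 < size g22)%N ->
  g11 * g22 %| ('X^m - 1) * g12 ->
  euclidean_LCD m g11 g12 g22 ->
  self_reciprocal (('X^m - 1) %/ lcmp g11 g22).
Proof.
move=> m0 copFm d11 d22 _ _ LCD.
have mn0 := char_ok copFm.
have MnZ : ('X^m - 1 : {poly F}) != 0 by apply: Mn0.
have g11n0 : g11 != 0 by apply: contra_neq MnZ => e; move: d11; rewrite e dvd0p => /eqP.
have g22n0 : g22 != 0 by apply: contra_neq MnZ => e; move: d22; rewrite e dvd0p => /eqP.
set g := gcdp g11 g22.
have gn0 : g != 0 by rewrite gcdp_eq0 negb_and g11n0.
set a := g11 %/ g; set b := g22 %/ g.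
have ha : g11 = a * g by rewrite divpK // dvdp_gcdl.
have hb : g22 = b * g by rewrite divpK // dvdp_gcdr.
have hL : lcmp g11 g22 = g11 * b by rewrite /lcmp -/g {1}hb mulrA mulpK.
have hL' : lcmp g11 g22 = a * g22 by rewrite hL {1}ha hb; ring.
have cop_ab : coprimep a b by apply: coprimep_div_gcd; rewrite g11n0.
have LM : lcmp g11 g22 %| 'X^m - 1.
  have /dvdpP [u Hu] := d11.
  rewrite hL Hu [u * g11]mulrC dvdp_mul2l //.
  have : b * g %| u * (a * g) by rewrite -hb -ha -Hu.
  by rewrite mulrA dvdp_mul2r // Gauss_dvdpl // coprimep_sym.
have hgg : g11 * g22 = lcmp g11 g22 * g by rewrite hL hb; ring.
set L := lcmp g11 g22 in LM hL hL' hgg *.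
set l := ('X^m - 1) %/ L.
have E : l * L = 'X^m - 1 by rewrite divpK.
have dL11 : g11 %| L by rewrite hL dvdp_mulIl.
have dL22 : g22 %| L by rewrite hL' dvdp_mulIr.
have copL : coprimep l L by apply: sqfree m0 mn0 E.
have ln0 : l != 0 by apply: contra_neq MnZ => e; rewrite -E e mul0r.
have Ln0 : L != 0 by apply: contra_neq MnZ => e; rewrite -E e mulr0.
have zero : forall x y, l %| x * iot m g11 + y * iot m g12 -> l %| y * iot m g22 ->
    ('X^m - 1 %| L * x) /\ ('X^m - 1 %| L * y).
  move=> x y h1 h2.
  have := LCD _ (in_C g12 E dL11 dL22 copL x y) (ortho m0 E h1 h2).
  by case=> /modp_eq0P h3 /modp_eq0P h4.
have key : coprimep l (iot m g11 * iot m g22).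
  case Hc : (coprimep _ _) => //; exfalso.
  set d := gcdp l (iot m g11 * iot m g22).
  set t := l %/ d.
  have hl : l = t * d by rewrite divpK // dvdp_gcdl.
  have tn0 : t != 0 by apply: contra_neq ln0 => e; rewrite hl e mul0r.
  have dn1 : ~~ (d %| 1) by rewrite dvdp1 -coprimep_def Hc.
  have tLn0 : t * L != 0 by rewrite mulf_neq0.
  case Hd : (d %| iot m g11).
    have p1 : l %| t * iot m g11 + 0 * iot m g12 by rewrite mul0r addr0 hl dvdp_mul2l.
    have p2 : l %| 0 * iot m g22 by rewrite mul0r dvdp0.
    have [h3 _] := zero t 0 p1 p2.
    move: h3; rewrite -E hl (_ : t * d * L = (t * L) * d); last by ring.
    rewrite (_ : L * t = (t * L) * 1); last by ring.
    by rewrite dvdp_mul2l // (negbTE dn1).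
  have p1 : l %| - (t * iot m g12) * iot m g11 + t * iot m g11 * iot m g12.
    by rewrite (_ : _ + _ = 0); [exact: dvdp0 | ring].
  have p2 : l %| t * iot m g11 * iot m g22.
    by rewrite hl -mulrA dvdp_mul2l // dvdp_gcdr.
  have [_ h4] := zero _ _ p1 p2.
  move: h4; rewrite -E hl (_ : t * d * L = (t * L) * d); last by ring.
  rewrite (_ : L * (t * iot m g11) = (t * L) * iot m g11); last by ring.
  by rewrite dvdp_mul2l // Hd.
have copLi : coprimep l (iot m L).
  apply: coprimep_dvdl key.
  by rewrite -iotM hgg iotM dvdp_mulIl.
have lM : l %| 'X^m - 1 by rewrite -E dvdp_mulIl.
have li : l %| iot m l.
  have := dvdp_trans lM (dvd_iotM F m).
  by rewrite -E iotM Gauss_dvdpl.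
have R := rev_cong m0 (leqnn (size l)).
have lr : l %| recip l.
  have : l %| (recip l - 'X^((size l).-1) * iot m l) + 'X^((size l).-1) * iot m l.
    apply: dvdp_add; last exact: dvdp_mull.
    by apply: dvdp_trans lM _; rewrite /recip subn1.
  by rewrite subrK.
split => //.
case/dvdpP: lr => q Hq; exists (q`_0).
have sz : (size (recip l) <= size l)%N by exact: size_poly.
have [q0|qn0] := eqVneq q 0.
  by rewrite Hq q0 mul0r coef0 scale0r.
have szq : (size q <= 1)%N.
  move: sz; rewrite Hq size_mul //.
  have := size_poly_gt0 l; rewrite ln0 /=.
  case: (size l) => // n _; rewrite addnS /= -add1n leq_add2r.
  by [].
by rewrite Hq {1}(size1_polyC szq) mul_polyC.
Qed.
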